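(* Let $L_1,\ldots,L_r$, $\Lambda$ and $\mathcal F(\boldsymbol\alpha;P)$ be as follows: $L_i(\mathbf x)=\sum_{j\le n}\lambda_{i,j}x_j$ are real linear forms such that for every $\boldsymbol\alpha\in\mathbb{R}^r\setminus\{\mathbf0\}$ the form $\boldsymbol\alpha\cdot\mathbf L$ does not have all coefficients rational; $\Lambda$ is the $n\times r$ matrix with $(j,i)$ entry $\lambda_{i,j}$; and $\mathcal F(\boldsymbol\alpha;P)=\sup_{q\in\mathbb N,\mathbf a\in\mathbb Z^n}\prod_{v\le n}(q+P|q\lambda_v-a_v|)^{-1}$ with $\boldsymbol\lambda=\Lambda\boldsymbol\alpha$. Let $\theta$ be a small positive real number. Then there exists a function $T:[1,\infty)\to[1,\infty)$, increasing monotonically to infinity, such that $T(P)\le P^\theta$ for all $P$ and \[ \sup_{P^{\theta-1}\le|\Lambda\boldsymbol\alpha|\le T(P)}\mathcal F(\boldsymbol\alpha;P)\le T(P)^{-1}. \]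
   Context: $|\mathbf y|=\max_i|y_i|$ for vectors. *)

(* Defs.v *)
From Stdlib Require Import Reals Lra ZArith QArith.
Open Scope R_scope.

(* Vectors in R^n are functions nat -> R; only indices < n matter. *)

Fixpoint sumR (n : nat) (f : nat -> R) : R :=
  match n with O => 0 | S m => sumR m f + f m end.

Fixpoint prodR (n : nat) (f : nat -> R) : R :=
  match n with O => 1 | S m => prodR m f * f m end.

Fixpoint supnorm (n : nat) (y : nat -> R) : R :=
  match n with O => 0 | S m => Rmax (supnorm m y) (Rabs (y m)) end.

(* lam i j = lambda_{i,j}: coefficient of x_j in L_i, i < r, j < n. *)

Definition comb_coef (r : nat) (lam : nat -> nat -> R) (alpha : nat -> R) (j : nat) : R :=
  sumR r (fun i => alpha i * lam i j).

(* Lambda alpha, where Lambda is the n x r matrix with (j,i) entry lambda_{i,j} *)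
Definition LamMul (r : nat) (lam : nat -> nat -> R) (alpha : nat -> R) : nat -> R :=
  fun j => sumR r (fun i => lam i j * alpha i).

Definition is_rational (x : R) : Prop := exists q : Q, x = Q2R q.

Definition irrational_hyp (n r : nat) (lam : nat -> nat -> R) : Prop :=
  forall alpha : nat -> R,
    (exists i, (i < r)%nat /\ alpha i <> 0) ->
    ~ (forall j, (j < n)%nat -> is_rational (comb_coef r lam alpha j)).

Definition Fterm (n r : nat) (lam : nat -> nat -> R) (alpha : nat -> R) (P : R)
    (q : nat) (a : nat -> Z) : R :=
  prodR n (fun v => / (INR q + P * Rabs (INR q * LamMul r lam alpha v - IZR (a v)))).

Definition F_le (n r : nat) (lam : nat -> nat -> R) (alpha : nat -> R) (P c : R) : Prop :=
  forall (q : nat) (a : nat -> Z), (1 <= q)%nat -> Fterm n r lam alpha P q a <= c.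

(* Main.v *)
Require Import Defs.
From Stdlib Require Import Reals Lra ZArith QArith Lia Classical IndefiniteDescription FunctionalExtensionality.
From Coquelicot Require Compactness.
Open Scope R_scope.


Lemma sumR_ext m f g : (forall i, (i < m)%nat -> f i = g i) -> sumR m f = sumR m g.
Proof. induction m; simpl; intros H; auto. rewrite IHm by (intros; apply H; lia). rewrite H by lia. auto. Qed.

Lemma sumR_plus m f g : sumR m (fun i => f i + g i) = sumR m f + sumR m g.
Proof. induction m; simpl; [lra|]. rewrite IHm; lra. Qed.

Lemma sumR_scale m c f : sumR m (fun i => c * f i) = c * sumR m f.
Proof. induction m; simpl; [lra|]. rewrite IHm; lra. Qed.

Lemma supnorm_ge0 n y : 0 <= supnorm n y.
Proof. induction n; simpl; [lra|]. eapply Rle_trans; [exact IHn| apply Rmax_l]. Qed.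

Lemma supnorm_ge n y v : (v < n)%nat -> Rabs (y v) <= supnorm n y.
Proof. induction n; intros H; [lia|]. simpl. destruct (Nat.eq_dec v n).
 subst; apply Rmax_r. eapply Rle_trans; [apply IHn; lia| apply Rmax_l]. Qed.

Lemma supnorm_le n y c : 0 <= c -> (forall v, (v<n)%nat -> Rabs (y v) <= c) -> supnorm n y <= c.
Proof. induction n; simpl; intros Hc H; auto. apply Rmax_lub; auto. Qed.

Lemma supnorm_attain n y : (1 <= n)%nat -> exists v, (v < n)%nat /\ supnorm n y = Rabs (y v).
Proof. induction n; intros H; [lia|]. simpl. destruct n.
 - exists 0%nat; split; auto. simpl. unfold Rmax. destruct (Rle_dec 0 (Rabs (y 0%nat))); auto.
   pose proof (Rabs_pos (y 0%nat)); lra.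
 - destruct IHn as [v [Hv E]]; [lia|]. unfold Rmax. destruct (Rle_dec _ _).
   exists (S n); split; auto. exists v; split; [lia|]. simpl in E. exact E. Qed.

Lemma supnorm_ext n y z : (forall v, (v<n)%nat -> y v = z v) -> supnorm n y = supnorm n z.
Proof. induction n; simpl; intros H; auto. rewrite IHn by (intros; apply H; lia). rewrite H by lia; auto. Qed.

Lemma supnorm_tri n y z : supnorm n (fun v => y v + z v) <= supnorm n y + supnorm n z.
Proof. apply supnorm_le. pose proof (supnorm_ge0 n y); pose proof (supnorm_ge0 n z); lra.
 intros v Hv. eapply Rle_trans; [apply Rabs_triang|]. pose proof (supnorm_ge n y v Hv); pose proof (supnorm_ge n z v Hv); lra. Qed.

Lemma supnorm_scale n c y : supnorm n (fun v => c * y v) = Rabs c * supnorm n y.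
Proof. induction n; simpl; [lra|]. rewrite IHn, Rabs_mult, RmaxRmult; auto. apply Rabs_pos. Qed.

Lemma prodR_pos n f : (forall v, (v<n)%nat -> 0 < f v) -> 0 < prodR n f.
Proof. induction n; simpl; intros H; [lra|]. apply Rmult_lt_0_compat; auto. Qed.

Lemma prodR_le1 n f : (forall v, (v<n)%nat -> 0 < f v <= 1) -> prodR n f <= 1.
Proof. induction n; simpl; intros H; [lra|]. assert (H1: prodR n f <= 1) by auto.
 assert (H2 : 0 < prodR n f) by (apply prodR_pos; intros; apply H; lia).
 destruct (H n) as [H3 H4]; [lia|]. nra. Qed.

Lemma prodR_le_factor n f v : (forall v, (v<n)%nat -> 0 < f v <= 1) -> (v < n)%nat -> prodR n f <= f v.
Proof. induction n; simpl; intros H Hv; [lia|].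
 assert (H1: prodR n f <= 1) by (apply prodR_le1; auto).
 assert (H2 : 0 < prodR n f) by (apply prodR_pos; intros; apply H; lia).
 destruct (H n) as [H3 H4]; [lia|]. destruct (Nat.eq_dec v n). subst; nra.
 assert (prodR n f <= f v) by (apply IHn; auto; lia). destruct (H v); [lia|]. nra. Qed.

Lemma LamMul_S r lam a j : LamMul (S r) lam a j = LamMul r lam a j + lam r j * a r.
Proof. reflexivity. Qed.

Lemma LamMul_scale r lam c a j : LamMul r lam (fun i => c * a i) j = c * LamMul r lam a j.
Proof. unfold LamMul. rewrite <- sumR_scale. apply sumR_ext; intros; lra. Qed.

Lemma LamMul_plus r lam a b j : LamMul r lam (fun i => a i + b i) j = LamMul r lam a j + LamMul r lam b j.
Proof. unfold LamMul. rewrite <- sumR_plus. apply sumR_ext; intros; lra. Qed.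

Lemma supnorm_opp n y : supnorm n (fun v => - y v) = supnorm n y.
Proof. rewrite (supnorm_ext n _ (fun v => -1 * y v)) by (intros; ring).
 rewrite supnorm_scale. rewrite (Rabs_left (-1)) by lra. ring. Qed.

Lemma closed_img n lam : forall r x, (forall a, ~ (forall v, (v<n)%nat -> x v = LamMul r lam a v)) ->
  exists eta, 0 < eta /\ forall a, eta <= supnorm n (fun v => x v - LamMul r lam a v).
Proof.
induction r as [|r IH]; intros x Hx.
- destruct (classic (exists v, (v<n)%nat /\ x v <> 0)) as [[v [Hv Hxv]]|Hn].
  + exists (Rabs (x v)); split; [apply Rabs_pos_lt; auto|].
    intros a. eapply Rle_trans; [|apply (supnorm_ge _ _ v Hv)]. simpl. right. f_equal. unfold LamMul; simpl; ring.
  + exfalso. apply (Hx (fun _ => 0)). intros v Hv. unfold LamMul; simpl.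
    apply NNPP; intro H; apply Hn; exists v; split; auto.
- destruct (classic (exists b, forall v, (v<n)%nat -> lam r v = LamMul r lam b v)) as [[b Hb]|Hnb].
  + assert (Hx' : forall g, ~ (forall v, (v<n)%nat -> x v = LamMul r lam g v)).
    { intros g Hg. apply (Hx (fun i => if Nat.eq_dec i r then 0 else g i)). intros v Hv.
      rewrite LamMul_S; cbv beta. replace (if Nat.eq_dec r r then 0 else g r) with 0 by (destruct (Nat.eq_dec r r); congruence).
      rewrite Hg by auto. unfold LamMul. rewrite (sumR_ext r (fun i => lam i v * (if Nat.eq_dec i r then 0 else g i)) (fun i => lam i v * g i)). ring.
      intros i Hi. destruct (Nat.eq_dec i r); [lia|auto]. }
    destruct (IH x Hx') as [eta [Heta H]]. exists eta; split; auto. intros a.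
    rewrite (supnorm_ext n _ (fun v => x v - LamMul r lam (fun i => a i + a r * b i) v)).
    apply H. intros v Hv. rewrite LamMul_S, LamMul_plus, LamMul_scale, <- Hb by auto. ring.
  + assert (Hw : forall b, ~ (forall v, (v<n)%nat -> lam r v = LamMul r lam b v)).
    { intros b Hb. apply Hnb. exists b; auto. }
    destruct (IH (fun v => lam r v) Hw) as [eta0 [Heta0 H0]].
    assert (Claim1 : forall t b, Rabs t * eta0 <= supnorm n (fun v => LamMul r lam b v + t * lam r v)).
    { intros t b. destruct (Req_dec t 0) as [->|Ht].
      - rewrite Rabs_R0, Rmult_0_l. apply supnorm_ge0.
      - rewrite (supnorm_ext n _ (fun v => t * (lam r v - LamMul r lam (fun i => -(/t) * b i) v))).
        rewrite supnorm_scale. apply Rmult_le_compat_l; [apply Rabs_pos| apply H0].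
        intros v Hv. rewrite LamMul_scale. field; auto. }
    assert (Hloc : forall t, {e | 0 < e /\ forall b, e <= supnorm n (fun v => x v - t * lam r v - LamMul r lam b v)}).
    { intros t. apply constructive_indefinite_description.
      destruct (IH (fun v => x v - t * lam r v)) as [e [He1 He2]].
      - intros g Hg. apply (Hx (fun i => if Nat.eq_dec i r then t else g i)). intros v Hv.
        rewrite LamMul_S; cbv beta. replace (if Nat.eq_dec r r then t else g r) with t by (destruct (Nat.eq_dec r r); congruence).
        unfold LamMul at 1. rewrite (sumR_ext r (fun i => lam i v * (if Nat.eq_dec i r then t else g i)) (fun i => lam i v * g i)).
        fold (LamMul r lam g v). rewrite <- Hg by auto. ring.
        intros i Hi. destruct (Nat.eq_dec i r); [lia|auto].
      - exists e; split; auto. }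
    set (ef := fun t => proj1_sig (Hloc t)).
    assert (Hef : forall t, 0 < ef t /\ forall b, ef t <= supnorm n (fun v => x v - t * lam r v - LamMul r lam b v)).
    { intros t. unfold ef. destruct (Hloc t); simpl; auto. }
    set (W := supnorm n (fun v => lam r v)).
    assert (HW : 0 <= W) by apply supnorm_ge0.
    assert (Hdpos : forall t, 0 < ef t / (2 * (W + 1))).
    { intros t. destruct (Hef t). apply Rdiv_lt_0_compat; lra. }
    set (delta := fun t => mkposreal _ (Hdpos t)).
    assert (Hl : forall t s, Rabs (s - t) < delta t -> forall b, ef t / 2 <= supnorm n (fun v => x v - s * lam r v - LamMul r lam b v)).
    { intros t s Hs b. simpl in Hs. destruct (Hef t) as [Hp Hb]. specialize (Hb b).
      pose proof (supnorm_tri n (fun v => x v - s * lam r v - LamMul r lam b v) (fun v => (s - t) * lam r v)) as Ht.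
      rewrite (supnorm_ext n (fun v => _ + _) (fun v => x v - t * lam r v - LamMul r lam b v)) in Ht by (intros; ring).
      rewrite supnorm_scale in Ht. fold W in Ht.
      assert (Rabs (s - t) * W <= ef t / 2).
      { apply Rle_trans with (ef t / (2 * (W + 1)) * W). apply Rmult_le_compat_r; lra.
        apply Rmult_le_reg_r with (2 * (W+1)); [lra|]. field_simplify; [|lra]. nra. }
      change (supnorm n (lam r)) with W in Ht. lra. }
    set (B := (supnorm n x + 1) / eta0).
    destruct (Compactness.compactness_value_1d (-B) B delta) as [d Hd].
    exists (Rmin 1 d). split; [apply Rmin_glb_lt; [lra| apply cond_pos]|].
    intros a.
    rewrite (supnorm_ext n _ (fun v => x v - a r * lam r v - LamMul r lam a v)) by (intros; rewrite LamMul_S; ring).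
    destruct (Rle_dec (Rabs (a r)) B) as [Hin|Hout].
    * apply NNPP; intro Hn. apply (Hd (a r)); [unfold Rabs in Hin; destruct (Rcase_abs (a r)); split; lra|].
      intros [t0 [Ht0 [Hd1 Hd2]]]. apply Hn. simpl in Hd2.
      specialize (Hl t0 (a r)). simpl in Hl. simpl in Hd1.
      specialize (Hl Hd1 a). destruct (Hef t0) as [Hp _].
      assert (ef t0 / (2 * (W + 1)) <= ef t0 / 2).
      { unfold Rdiv. apply Rmult_le_compat_l; [lra|]. apply Rinv_le_contravar; lra. }
      pose proof (Rmin_r 1 d). lra.
    * apply Rnot_le_lt in Hout.
      pose proof (Claim1 (a r) a) as C.
      pose proof (supnorm_tri n x (fun v => - (x v - a r * lam r v - LamMul r lam a v))) as T.
      rewrite supnorm_opp in T.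
      rewrite (supnorm_ext n (fun v => _ + _) (fun v => LamMul r lam a v + a r * lam r v)) in T by (intros; ring).
      assert (B * eta0 = supnorm n x + 1) by (unfold B; field; lra).
      assert (B * eta0 < Rabs (a r) * eta0) by (apply Rmult_lt_compat_r; auto).
      pose proof (Rmin_l 1 d). lra.
Qed.

Lemma zrange_unif (N : Z) (Q : Z -> R -> Prop) :
  (forall c e e', Q c e -> 0 < e' <= e -> Q c e') ->
  (forall c, (Z.abs c <= N)%Z -> exists e, 0 < e /\ Q c e) ->
  exists e, 0 < e /\ forall c, (Z.abs c <= N)%Z -> Q c e.
Proof.
  intros Hm H.
  assert (G : forall m : nat, exists e, 0 < e /\ forall c, (- N <= c <= - N + Z.of_nat m)%Z -> (Z.abs c <= N)%Z -> Q c e).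
  { induction m as [|m IH].
    - destruct (Z_le_dec (Z.abs (-N)) N) as [Hl|Hl].
      + destruct (H _ Hl) as [e [He Hq]]. exists e; split; auto. intros c Hc _.
        replace c with (-N)%Z by lia. auto.
      + exists 1; split; [lra|]. intros c Hc Hc2. exfalso. apply Hl. replace (-N)%Z with c by lia. auto.
    - destruct IH as [e [He Hq]].
      destruct (Z_le_dec (Z.abs (-N + Z.of_nat (S m))) N) as [Hl|Hl].
      + destruct (H _ Hl) as [e2 [He2 Hq2]]. exists (Rmin e e2); split; [apply Rmin_glb_lt; auto|].
        intros c Hc Hc2. destruct (Z.eq_dec c (-N + Z.of_nat (S m))%Z) as [->|Hne].
        * apply Hm with e2; auto. split; [apply Rmin_glb_lt; auto| apply Rmin_r].
        * apply Hm with e; [apply Hq; auto; lia|]. split; [apply Rmin_glb_lt; auto| apply Rmin_l].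
      + exists e; split; auto. intros c Hc Hc2. destruct (Z.eq_dec c (-N + Z.of_nat (S m))%Z) as [->|Hne].
        * contradiction. * apply Hq; auto; lia. }
  destruct (G (Z.to_nat (2 * N))) as [e [He Hq]]. exists e; split; auto.
  intros c Hc. apply Hq; auto. lia.
Qed.

Lemma box_unif (N : Z) (Q : (nat -> Z) -> R -> Prop) :
  (forall a e e', Q a e -> 0 < e' <= e -> Q a e') ->
  forall k (b : nat -> Z),
  (forall a, (forall v, (v < k)%nat -> (Z.abs (a v) <= N)%Z) -> (forall v, (k <= v)%nat -> a v = b v) ->
     exists e, 0 < e /\ Q a e) ->
  exists e, 0 < e /\ forall a, (forall v, (v < k)%nat -> (Z.abs (a v) <= N)%Z) -> (forall v, (k <= v)%nat -> a v = b v) -> Q a e.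
Proof.
  intros Hm k. induction k as [|k IH]; intros b H.
  - destruct (H b) as [e [He Hq]]; [intros; lia| auto |].
    exists e; split; auto. intros a _ Ha. replace a with b; auto. apply functional_extensionality; intros v; symmetry; apply Ha; lia.
  - set (bc := fun (c : Z) v => if Nat.eq_dec v k then c else b v).
    destruct (zrange_unif N (fun c e => forall a, (forall v, (v < k)%nat -> (Z.abs (a v) <= N)%Z) -> (forall v, (k <= v)%nat -> a v = bc c v) -> Q a e)) as [e [He Hq]].
    + intros c e e' H1 H2 a Ha1 Ha2. apply Hm with e; auto.
    + intros c Hc. apply IH. intros a Ha1 Ha2. apply H.
      * intros v Hv. destruct (Nat.eq_dec v k) as [->|]. rewrite Ha2 by lia. unfold bc. destruct (Nat.eq_dec k k); [auto|congruence].
        apply Ha1; lia.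
      * intros v Hv. rewrite Ha2 by lia. unfold bc. destruct (Nat.eq_dec v k); [lia|auto].
    + exists e; split; auto. intros a Ha1 Ha2. apply (Hq (a k)); [apply Ha1; lia| intros; apply Ha1; lia|].
      intros v Hv. unfold bc. destruct (Nat.eq_dec v k) as [->|]; auto. apply Ha2; lia.
Qed.

Fixpoint fth (g : nat -> R) (k : nat) : R :=
  match k with O => 1 | S k' => Rmax (fth g k') (g k) end.

Fixpoint cnt (f : nat -> R) (P : R) (m : nat) : nat :=
  match m with O => O | S m' => (cnt f P m' + if Rle_dec (f m) P then 1 else 0)%nat end.

Lemma fth_S g k : fth g k <= fth g (S k).
Proof. simpl. apply Rmax_l. Qed.

Lemma fth_mono g k l : (k <= l)%nat -> fth g k <= fth g l.
Proof. induction 1; [lra|]. eapply Rle_trans; [eauto| apply fth_S]. Qed.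

Lemma fth_g g k : (1 <= k)%nat -> g k <= fth g k.
Proof. destruct k; [lia|]. intros _. simpl. apply Rmax_r. Qed.

Lemma cnt_le f P m : (cnt f P m <= m)%nat.
Proof. induction m; simpl; auto. destruct (Rle_dec _ _); lia. Qed.

Lemma cnt_all f P m : (forall k, (1 <= k <= m)%nat -> f k <= P) -> cnt f P m = m.
Proof. induction m; simpl; intros H; auto. rewrite IHm by (intros; apply H; lia).
 destruct (Rle_dec _ _) as [|n]; [lia|]. exfalso; apply n, H; lia. Qed.

Lemma cnt_char g P m : cnt (fth g) P m = O \/ ((1 <= cnt (fth g) P m)%nat /\ fth g (cnt (fth g) P m) <= P).
Proof. induction m; simpl; auto. destruct (Rle_dec _ _) as [Hl|Hl].
 - right. rewrite (cnt_all (fth g) P m). split; [lia|]. replace (m+1)%nat with (S m) by lia. exact Hl.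
   intros k Hk. eapply Rle_trans; [apply fth_mono with (l := S m); lia| exact Hl].
 - rewrite Nat.add_0_r. auto. Qed.

Lemma cnt_monoP f P1 P2 m : P1 <= P2 -> (cnt f P1 m <= cnt f P2 m)%nat.
Proof. intros H; induction m; simpl; auto. destruct (Rle_dec (f (S m)) P1); destruct (Rle_dec (f (S m)) P2); try lia.
 exfalso; lra. Qed.

Lemma cnt_monom f P m1 m2 : (m1 <= m2)%nat -> (cnt f P m1 <= cnt f P m2)%nat.
Proof. induction 1; auto. simpl. lia. Qed.

Lemma up_mono x y : x <= y -> (up x <= up y)%Z.
Proof. intros H. destruct (archimed x); destruct (archimed y).
 destruct (Z_le_dec (up x) (up y)); auto. assert (up y <= up x - 1)%Z by lia.
 apply IZR_le in H4. rewrite minus_IZR in H4. lra. Qed.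

Lemma Q2R_inject_Z z : Q2R (inject_Z z) = IZR z.
Proof. unfold Q2R, inject_Z; simpl. field. Qed.

Lemma sep n r lam (H : irrational_hyp n r lam) (a : nat -> Z) :
  (exists v, (v<n)%nat /\ a v <> 0%Z) ->
  exists e, 0<e /\ forall al, e <= supnorm n (fun v => IZR (a v) - LamMul r lam al v).
Proof. intros [v0 [Hv0 Ha0]]. apply (closed_img n lam r (fun v => IZR (a v))). intros al Hal.
 destruct (classic (exists i, (i<r)%nat /\ al i <> 0)) as [Hnz|Hz].
 - apply (H al Hnz). intros j Hj. exists (inject_Z (a j)). rewrite Q2R_inject_Z, Hal by auto.
   unfold comb_coef, LamMul. apply sumR_ext; intros; ring.
 - apply Ha0. apply eq_IZR. rewrite Hal by auto. unfold LamMul.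
   transitivity (sumR r (fun _ => 0)).
   + apply sumR_ext; intros i Hi. assert (al i = 0) as E by (apply NNPP; intro; apply Hz; eauto). rewrite E; ring.
   + clear; induction r; simpl; lra.
Qed.

Lemma unif n r lam (H : irrational_hyp n r lam) (N : Z) : exists e, 0<e /\ forall a,
  (forall v, (v<n)%nat -> (Z.abs (a v) <= N)%Z) -> (exists v, (v<n)%nat /\ a v <> 0%Z) ->
  forall al, e <= supnorm n (fun v => IZR (a v) - LamMul r lam al v).
Proof.
 destruct (box_unif N (fun (a : nat -> Z) (e : R) => (exists v : nat, (v<n)%nat /\ a v <> 0%Z) -> forall al, e <= supnorm n (fun v => IZR (a v) - LamMul r lam al v))) with (k := n) (b := fun _ : nat => 0%Z) as [e [He Hq]].
 - intros a e e' H1 H2 Hnz al. specialize (H1 Hnz al). lra.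
 - intros a _ _. destruct (classic (exists v, (v<n)%nat /\ a v <> 0%Z)) as [Hnz|Hz].
   + destruct (sep n r lam H a Hnz) as [e [He Hs]]. exists e; split; auto.
   + exists 1; split; [lra|]. intros Hnz; contradiction.
 - exists e; split; auto. intros a Ha Hnz al.
   set (a' := fun v => if Nat.ltb v n then a v else 0%Z).
   assert (Ea : forall v, (v < n)%nat -> a' v = a v).
   { intros v Hv; unfold a'. destruct (Nat.ltb_spec v n); [auto|lia]. }
   rewrite (supnorm_ext n _ (fun v => IZR (a' v) - LamMul r lam al v)).
   + apply Hq.
     * intros v Hv; rewrite Ea; auto.
     * intros v Hv; unfold a'. destruct (Nat.ltb_spec v n); [lia|auto].
     * destruct Hnz as [v [Hv Hav]]; exists v; split; auto; rewrite Ea; auto.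
   + intros v Hv; rewrite Ea; auto.
Qed.

Lemma factor_ok P q (x : R) : 1 <= P -> (1 <= q)%nat -> 0 < / (INR q + P * Rabs x) <= 1.
Proof. intros HP Hq. apply le_INR in Hq. simpl in Hq.
 assert (0 <= P * Rabs x) by (apply Rmult_le_pos; [lra| apply Rabs_pos]).
 split. apply Rinv_0_lt_compat; lra. apply Rle_trans with (/1); [apply Rinv_le_contravar; lra| rewrite Rinv_1; lra]. Qed.

Theorem mainTheorem8 (n r : nat) (lam : nat -> nat -> R) :
  irrational_hyp n r lam ->
  exists theta0 : R, 0 < theta0 /\
  forall theta : R, 0 < theta < theta0 ->
  exists T : R -> R,
    (forall P, 1 <= P -> 1 <= T P) /\
    (forall P1 P2, 1 <= P1 -> P1 <= P2 -> T P1 <= T P2) /\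
    (forall M, exists P0, 1 <= P0 /\ forall P, P0 <= P -> M <= T P) /\
    (forall P, 1 <= P -> T P <= Rpower P theta) /\
    (forall P, 1 <= P ->
       forall alpha : nat -> R,
         Rpower P (theta - 1) <= supnorm n (LamMul r lam alpha) <= T P ->
         F_le n r lam alpha P (/ T P)).
Proof.
  intros H. exists 1. split; [lra|]. intros theta [Ht0 Ht1].
  set (ex := fun c : nat => constructive_indefinite_description _ (unif n r lam H (Z.of_nat (S (S c * S c))))).
  set (e := fun c => proj1_sig (ex c)).
  assert (He : forall c, 0 < e c /\ forall a,
    (forall v, (v<n)%nat -> (Z.abs (a v) <= Z.of_nat (S (S c * S c)))%Z) -> (exists v, (v<n)%nat /\ a v <> 0%Z) ->
    forall al, e c <= supnorm n (fun v => IZR (a v) - LamMul r lam al v)).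
  { intros c. unfold e. destruct (ex c); simpl; auto. }
  set (g := fun k => Rmax (INR (S k)) (Rmax (Rpower (INR (S k)) (/ theta)) (INR (S k) / e k))).
  set (f := fth g).
  assert (Hfk : forall k, INR k + 1 <= f k).
  { intros [|k]. simpl. unfold f; simpl; lra.
    unfold f. eapply Rle_trans; [|apply fth_g; lia]. unfold g. rewrite <- S_INR. apply Rmax_l. }
  set (c := fun P => cnt f P (Z.to_nat (up P))).
  exists (fun P => INR (S (c P))).
  assert (Hchar : forall P, c P = O \/ ((1 <= c P)%nat /\ f (c P) <= P)) by (intros; apply cnt_char).
  assert (Hg : forall P, (1 <= c P)%nat -> f (c P) <= P ->
     INR (S (c P)) <= P /\ Rpower (INR (S (c P))) (/theta) <= P /\ INR (S (c P)) <= P * e (c P)).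
  { intros P H1 H2. assert (G: g (c P) <= P) by (eapply Rle_trans; [apply fth_g; auto| exact H2]).
    unfold g in G. pose proof (Rmax_l (INR (S (c P))) (Rmax (Rpower (INR (S (c P))) (/ theta)) (INR (S (c P)) / e (c P)))).
    pose proof (Rmax_r (INR (S (c P))) (Rmax (Rpower (INR (S (c P))) (/ theta)) (INR (S (c P)) / e (c P)))).
    pose proof (Rmax_l (Rpower (INR (S (c P))) (/ theta)) (INR (S (c P)) / e (c P))).
    pose proof (Rmax_r (Rpower (INR (S (c P))) (/ theta)) (INR (S (c P)) / e (c P))).
    destruct (He (c P)) as [Hep _].
    split; [lra|]. split; [lra|].
    assert (INR (S (c P)) / e (c P) <= P) by lra.
    apply Rmult_le_reg_r with (/ e (c P)). apply Rinv_0_lt_compat; auto.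
    rewrite Rmult_assoc, Rinv_r by lra. lra. }
  assert (HTle : forall P, 1 <= P -> INR (S (c P)) <= Rpower P theta).
  { intros P HP. destruct (Hchar P) as [E|[H1 H2]].
    - rewrite E. simpl. rewrite <- (Rpower_O P) by lra. apply Rle_Rpower; lra.
    - destruct (Hg P H1 H2) as [_ [G _]].
      replace (INR (S (c P))) with (Rpower (Rpower (INR (S (c P))) (/theta)) theta).
      + apply Rle_Rpower_l; [lra|]. split; auto. apply exp_pos.
      + rewrite Rpower_mult. rewrite Rinv_l by lra. apply Rpower_1. apply lt_0_INR; lia. }
  split; [|split; [|split; [|split]]].
  - intros P _. rewrite S_INR. pose proof (pos_INR (c P)). lra.
  - intros P1 P2 H1 H2. apply le_INR. apply le_n_S. unfold c.
    apply Nat.le_trans with (cnt f P2 (Z.to_nat (up P1))). apply cnt_monoP; auto.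
    apply cnt_monom. apply Z2Nat.inj_le.
    + destruct (archimed P1). apply le_IZR. lra.
    + destruct (archimed P2). apply le_IZR. lra.
    + apply up_mono; auto.
  - intros M. destruct (archimed M) as [HM _].
    set (K := Z.to_nat (up M)).
    exists (Rmax 1 (f K)). split; [apply Rmax_l|]. intros P HP.
    pose proof (Rmax_l 1 (f K)). pose proof (Rmax_r 1 (f K)).
    assert (EK : cnt f P K = K).
    { apply cnt_all. intros k Hk. apply Rle_trans with (f K); [apply fth_mono; lia| lra]. }
    assert (HKP : (K <= Z.to_nat (up P))%nat).
    { pose proof (Hfk K). destruct (archimed P).
      assert (INR K < IZR (up P)) by lra. rewrite INR_IZR_INZ in H5. apply lt_IZR in H5. lia. }
    assert (K <= c P)%nat by (unfold c; rewrite <- EK at 1; apply cnt_monom; auto).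
    apply le_INR in H2. rewrite S_INR.
    destruct (Z_le_dec 0 (up M)) as [Hz|Hz].
    + assert (INR K = IZR (up M)) by (unfold K; rewrite INR_IZR_INZ, Z2Nat.id; auto). lra.
    + assert (IZR (up M) < IZR 0) by (apply IZR_lt; lia). pose proof (pos_INR K). lra.
  - exact HTle.
  - intros P HP alpha [Hlo Hhi] q a Hq. unfold Fterm.
    set (lamv := LamMul r lam alpha) in *.
    assert (Hfac : forall v, (v<n)%nat -> 0 < / (INR q + P * Rabs (INR q * lamv v - IZR (a v))) <= 1)
      by (intros; apply factor_ok; auto).
    assert (Hpos : 0 < Rpower P (theta - 1)) by apply exp_pos.
    assert (Hn : (1 <= n)%nat) by (destruct n; [simpl in Hlo; lra| lia]).
    assert (Hq1 : 1 <= INR q) by (apply le_INR in Hq; simpl in Hq; lra).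
    destruct (Hchar P) as [E|[H1 H2]].
    + rewrite E. simpl (INR 1). rewrite Rinv_1. apply prodR_le1; auto.
    + destruct (Hg P H1 H2) as [G1 [_ G3]]. pose proof (HTle P HP) as G2.
      set (T := INR (S (c P))) in *.
      assert (HT1 : 1 <= T) by (unfold T; rewrite S_INR; pose proof (pos_INR (c P)); lra).
      assert (Suff: exists v, (v<n)%nat /\ T <= INR q + P * Rabs (INR q * lamv v - IZR (a v))).
      { destruct (supnorm_attain n lamv Hn) as [v0 [Hv0 E0]].
        destruct (Rle_dec T (INR q)) as [Hqt|Hqt].
        - exists v0; split; auto. assert (0 <= P * Rabs (INR q * lamv v0 - IZR (a v0)))
            by (apply Rmult_le_pos; [lra|apply Rabs_pos]). lra.
        - apply Rnot_le_lt in Hqt. apply NNPP; intro Hno.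
          assert (Hall : forall v, (v<n)%nat -> P * Rabs (INR q * lamv v - IZR (a v)) < T).
          { intros v Hv. apply Rnot_le_lt. intro. apply Hno. exists v. split; auto. lra. }
          destruct (Z.eq_dec (a v0) 0) as [Ez|Enz].
          + specialize (Hall v0 Hv0). rewrite Ez in Hall.
            rewrite Rminus_0_r, Rabs_mult, (Rabs_right (INR q)) in Hall by lra.
            assert (Ep: Rpower P theta = P * Rpower P (theta-1)).
            { rewrite <- (Rpower_1 P) at 2 by lra. rewrite <- Rpower_plus. f_equal; ring. }
            pose proof (Rabs_pos (lamv v0)). assert (Rpower P (theta-1) <= Rabs (lamv v0)) by lra. assert (P * Rabs (lamv v0) <= P * (INR q * Rabs (lamv v0))) by (apply Rmult_le_compat_l; nra). assert (P * Rpower P (theta-1) <= P * Rabs (lamv v0)) by (apply Rmult_le_compat_l; lra). lra.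
          + assert (Hbox : forall v, (v<n)%nat -> (Z.abs (a v) <= Z.of_nat (S (S (c P) * S (c P))))%Z).
            { intros v Hv. specialize (Hall v Hv).
              assert (Hd: Rabs (INR q * lamv v - IZR (a v)) < 1).
              { pose proof (Rabs_pos (INR q * lamv v - IZR (a v))). nra. }
              assert (Hlv : Rabs (lamv v) <= T) by (apply Rle_trans with (supnorm n lamv); [apply supnorm_ge; auto| lra]).
              assert (Ha : Rabs (IZR (a v)) < T*T + 1).
              { replace (IZR (a v)) with (INR q * lamv v + - (INR q * lamv v - IZR (a v))) by ring.
                eapply Rle_lt_trans; [apply Rabs_triang|]. rewrite Rabs_Ropp, Rabs_mult, (Rabs_right (INR q)) by lra.
                pose proof (Rabs_pos (lamv v)). nra. }
              rewrite <- abs_IZR in Ha.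
              replace (T*T+1) with (IZR (Z.of_nat (S (S (c P) * S (c P))))) in Ha.
              - apply lt_IZR in Ha. lia.
              - rewrite <- INR_IZR_INZ, S_INR, mult_INR. unfold T. ring. }
            assert (Hnz : exists v, (v<n)%nat /\ a v <> 0%Z) by eauto.
            destruct (He (c P)) as [Hep Hb]. specialize (Hb a Hbox Hnz (fun i => INR q * alpha i)).
            destruct (supnorm_attain n (fun v => IZR (a v) - LamMul r lam (fun i => INR q * alpha i) v) Hn) as [v1 [Hv1 E1]].
            rewrite E1, LamMul_scale in Hb. change (LamMul r lam alpha v1) with (lamv v1) in Hb.
            specialize (Hall v1 Hv1). rewrite Rabs_minus_sym in Hb.
            assert (P * e (c P) <= P * Rabs (INR q * lamv v1 - IZR (a v1))) by (apply Rmult_le_compat_l; lra).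
            lra. }
      destruct Suff as [v [Hv Hle]]. eapply Rle_trans. apply (prodR_le_factor n _ v Hfac Hv).
      cbv beta. apply Rinv_le_contravar; lra.
Qed.
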